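(* Let $b\ge2$ be an integer and let $w=d_1\dots d_p$ be a fixed block of $b$-ary digits with $p\ge1$. Let $u=d_1\dots d_{p-1}$ and $v=d_2\dots d_p$. Then the following identities of formal Laurent series in $t$ hold: $$(1-bt)\,t^{1-p}Z_w(v,0)=1-t^{2-p}Z_w(v,0,u),\qquad (1-bt)\,Z_w(0)=1-t\,Z_w(v,0).$$ Moreover, $Z_w(v,0)(b^{-1})=b$ and $Z_w(v,0,u)(b^{-1})=b^{2-p}$.
   Context: Strings are finite sequences over $\{0,\dots,b-1\}$, including the empty string $\epsilon$. $k_w(X)$ is the number of possibly overlapping occurrences of $w$ in $X$. $Z_w(0)=\sum_l N_w(0,l)t^l$, where $N_w(0,l)$ is the number of strings of length $l$ with $k_w(X)=0$. For strings $x,y$, $Z_w(x,0,y)=\sum_l c_lt^l$, where $c_l$ is the number of strings of length $l$ with $k_w=0$, prefix $x$ and suffix $y$. Also $Z_w(x,0)=Z_w(x,0,\epsilon)$. When $p=1$, $u=v=\epsilon$. *)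

(* Defs.v *)
From mathcomp Require Import all_boot.
From Stdlib Require Import ZArith Reals.
Set Implicit Arguments. Unset Strict Implicit. Unset Printing Implicit Defensive.

Definition occ {T : eqType} (w X : seq T) : nat :=
  count (fun i => take (size w) (drop i X) == w) (iota 0 (size X - size w).+1).

Definition cnt (b : nat) (w x y : seq 'I_b) (l : nat) : nat :=
  #|[pred X : l.-tuple 'I_b | (occ w X == 0) && prefix x X && suffix y X]|.

(* Formal Laurent series in t with integer coefficients, as coefficient maps *)
Definition LS := Z -> Z.
Definition ser (c : nat -> nat) : LS :=
  fun n => if (n <? 0)%Z then 0%Z else Z.of_nat (c (Z.to_nat n)).
Definition tmul (k : Z) (f : LS) : LS := fun n => f (n - k)%Z.
Definition mul_1_bt (b : nat) (f : LS) : LS :=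
  fun n => (f n - Z.of_nat b * f (n - 1))%Z.
Definition ls_one : LS := fun n => if (n =? 0)%Z then 1%Z else 0%Z.
Definition ls_sub (f g : LS) : LS := fun n => (f n - g n)%Z.

Definition eval_inv_b (b : nat) (c : nat -> nat) (s : R) : Prop :=
  infinite_sum (fun l => (INR (c l) / INR b ^ l)%R) s.

(* Main.v *)
Require Import Defs.
From mathcomp Require Import all_boot.
From Stdlib Require Import ZArith Reals Lia Lra.
From mathcomp Require Import zify.

Section Comb.
Variable b : nat.
Implicit Types (w s x y : seq 'I_b).

Lemma occ0 w X : (occ w X == 0) = ~~ infix w X.
Proof.
rewrite /occ -leqn0 leqNgt -has_count; congr (~~ _).
apply/hasP/idP.
- move=> [i _ /eqP Hi]. apply/infixP.
  exists (take i X), (drop (size w) (drop i X)).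
  by rewrite -{1}Hi !cat_take_drop.
- move/infixP => [s [s' ->]]. exists (size s).
  + rewrite mem_iota !size_cat /= add0n.
    lia.
  + by rewrite drop_size_cat // take_size_cat.
Qed.

Fixpoint strs n : seq (seq 'I_b) :=
  if n is n'.+1 then [seq c :: s | c <- index_enum 'I_b, s <- strs n'] else [:: [::]].
Fixpoint strsr n : seq (seq 'I_b) :=
  if n is n'.+1 then [seq rcons s c | s <- strsr n', c <- index_enum 'I_b] else [:: [::]].

Lemma strs_ok n : uniq (strs n) /\ forall x, (x \in strs n) = (size x == n).
Proof.
elim: n => [|n [U M]] /=.
  split => // x; rewrite inE; case: x => //.
split.
  apply: allpairs_uniq => //; first exact: index_enum_uniq.
  by move=> [c1 s1] [c2 s2] _ _ /= [-> ->].
move=> x; apply/allpairsP/idP.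
  by move=> [[c s] [_ /= + ->]]; rewrite M /= eqSS.
case: x => // c s; rewrite /= eqSS -M => H.
by exists (c, s); rewrite mem_index_enum H.
Qed.

Lemma strsr_ok n : uniq (strsr n) /\ forall x, (x \in strsr n) = (size x == n).
Proof.
elim: n => [|n [U M]] /=.
  split => // x; rewrite inE; case: x => //.
split.
  apply: allpairs_uniq => //; first exact: index_enum_uniq.
  move=> [s1 c1] [s2 c2] _ _ /= E.
  by rewrite -(rcons_inj E).
move=> x; apply/allpairsP/idP.
  by move=> [[s c] [/= + _ ->]]; rewrite M size_rcons eqSS.
case/lastP: x => // s c; rewrite size_rcons eqSS -M => H.
by exists (s, c); rewrite mem_index_enum H.
Qed.

Lemma card_seq l (S : seq (seq 'I_b)) (P : pred (seq 'I_b)) :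
  uniq S -> (forall x, (x \in S) = (size x == l)) ->
  #|[pred X : l.-tuple 'I_b | P X]| = \sum_(s <- S) P s.
Proof.
move=> U M.
have -> : \sum_(s <- S) P s = count P S.
  elim: S {U M} => [|x S IH]; by rewrite ?big_nil ?big_cons //= IH.
rewrite cardE /enum_mem size_filter -enumT /=.
rewrite (_ : count _ _ = count P (map val (enum {: l.-tuple 'I_b}))); last first.
  by rewrite enumT [RHS]count_map.
apply/permP; apply: uniq_perm.
- rewrite map_inj_uniq; last exact: val_inj. by rewrite enum_uniq.
- exact: U.
- move=> x; rewrite M; apply/mapP/idP.
  + by move=> [t _ ->]; rewrite size_tuple.
  + move=> H; exists (Tuple H) => //. by rewrite mem_enum.
Qed.


Lemma sum_count (T : Type) (S : seq T) (P : pred T) :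
  \sum_(s <- S) (P s : nat) = count P S.
Proof. elim: S => [|x S IH]; by rewrite ?big_nil ?big_cons //= IH. Qed.

Lemma cntE w x y m :
  cnt w x y m = \sum_(s <- strs m) ((~~ infix w s) && prefix x s && suffix y s).
Proof.
rewrite /cnt (card_seq _ (strs m) (fun s => (occ w s == 0) && prefix x s && suffix y s)).
- by apply: eq_bigr => s _; rewrite occ0.
- by case: (strs_ok m).
- by case: (strs_ok m).
Qed.

Lemma cntEr w x y m :
  cnt w x y m = \sum_(s <- strsr m) ((~~ infix w s) && prefix x s && suffix y s).
Proof.
rewrite /cnt (card_seq _ (strsr m) (fun s => (occ w s == 0) && prefix x s && suffix y s)).
- by apply: eq_bigr => s _; rewrite occ0.
- by case: (strsr_ok m).
- by case: (strsr_ok m).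
Qed.

Lemma sum_const_b K : \sum_(c <- index_enum 'I_b) K = b * K.
Proof. by rewrite big_const_ord iter_addn_0 mulnC. Qed.

Lemma sum_pick (d : 'I_b) (F : 'I_b -> nat) : \sum_(c <- index_enum 'I_b) (c == d) * F c = F d.
Proof.
rewrite (bigD1_seq d) ?mem_index_enum ?index_enum_uniq //= eqxx mul1n big1 ?addn0 //.
by move=> c /negbTE ->.
Qed.

Lemma N1 (d1 : 'I_b) (v : seq 'I_b) m : let w := d1 :: v in
  b * cnt w [::] [::] m = cnt w [::] [::] m.+1 + cnt w v [::] m.
Proof.
move=> w; rewrite !cntE /= big_allpairs_dep /=.
rewrite -sum_const_b.
rewrite -[X in _ = _ + X](sum_pick d1 (fun _ => \sum_(s <- strs m) (~~ infix w s && prefix v s && suffix [::] s))).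
rewrite -big_split /=; apply: eq_bigr => c _; rewrite big_distrr -big_split /=.
apply: eq_bigr => s _.
rewrite !prefix0s !suffix0s !andbT.
rewrite eq_sym; case: (c == d1); case: (infix w s); case: (prefix v s) => //.
Qed.

Lemma prefix_rcons2 (v s : seq 'I_b) c :
  prefix v (rcons s c) = prefix v s || (v == rcons s c).
Proof.
elim: s v => [|a s IH] [|x v] //=.
by rewrite IH eqseq_cons andb_orr.
Qed.

Lemma N2 w (d1 : 'I_b) (v u : seq 'I_b) dp m :
  w = d1 :: v -> w = rcons u dp ->
  b * cnt w v [::] m + (size v == m.+1) = cnt w v [::] m.+1 + cnt w v u m.
Proof.
move=> Hw1 Hw2.
have -> : (size v == m.+1) = \sum_(X <- strsr m.+1) (v == X) :> nat.
  case: (strsr_ok m.+1) => U M.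
  by rewrite sum_count (eq_count (a2 := pred1 v)) ?count_uniq_mem // ?M // => X; rewrite /= eq_sym.
rewrite !cntEr /= !big_allpairs_dep /=.
rewrite big_distrr -big_split /=.
rewrite [X in _ = _ + X](eq_bigr (fun s => \sum_(c <- index_enum 'I_b) ((~~ infix w s && prefix v s && suffix u s : nat) * (c == dp)))); last first.
  by move=> s _; rewrite (eq_bigr (fun c => (c == dp) * (~~ infix w s && prefix v s && suffix u s : nat))) ?sum_pick // => c _; rewrite mulnC.
rewrite -big_split /=; apply: eq_bigr => s _.
rewrite -sum_const_b -big_split -big_split /=; apply: eq_bigr => c _.
rewrite prefix_rcons2 infix_rconsl !suffix0s !andbT.
rewrite (_ : suffix w (rcons s c) = (dp == c) && suffix u s); last by rewrite Hw2 suffix_rcons.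
have Sw : size w = (size v).+1 by rewrite Hw1.
have Sw2 : size w = (size u).+1 by rewrite Hw2 size_rcons.
case: (eqVneq v (rcons s c)) => [Ev|Nv].
  have Hp : prefix v s = false.
    by apply/negP => /size_prefix; rewrite Ev size_rcons ltnn.
  have Hi : infix w s = false.
    by apply/negP => /size_infix; rewrite Sw Ev size_rcons ltnNge leqnSn.
  have Hs : suffix u s = false.
    by apply/negP => /size_suffix; rewrite -[size u]/((size u).+1.-1) -Sw2 Sw Ev size_rcons /= ltnn.
  by rewrite Hp Hi Hs /= andbF.
rewrite orbF eq_sym.
by case: (c == dp); case: (infix w s); case: (prefix v s); case: (suffix u s).
Qed.

Lemma C0 w : w != [::] -> cnt w [::] [::] 0 = 1.
Proof. by move=> H; rewrite cntE /= big_seq1 infixs0 (negbTE H). Qed.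

Lemma A0 w v : w != [::] -> cnt w v [::] 0 = (v == [::]).
Proof. by move=> H; rewrite cntE /= big_seq1 infixs0 (negbTE H) prefixs0 suffixs0 andbT. Qed.

Lemma AleC w v m : cnt w v [::] m <= cnt w [::] [::] m.
Proof.
rewrite !cntE; apply: leq_sum => s _.
by case: (infix w s); case: (prefix v s); rewrite ?prefix0s.
Qed.

Lemma sum_cat k n (F : seq 'I_b -> nat) :
  \sum_(s <- strs (k + n)) F s = \sum_(x <- strs k) \sum_(y <- strs n) F (x ++ y).
Proof.
elim: k F => [|k IH] F; first by rewrite add0n /= big_seq1.
rewrite addSn /= !big_allpairs_dep; apply: eq_bigr => c _.
by rewrite IH.
Qed.

Lemma size_strs n : size (strs n) = expn b n.
Proof.
elim: n => [|n IH] //=.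
rewrite size_allpairs IH expnS; congr (_ * _).
by rewrite -sum1_size sum_const_b muln1.
Qed.

Lemma Cbound w n : w != [::] ->
  cnt w [::] [::] (size w + n) <= (expn b (size w) - 1) * cnt w [::] [::] n.
Proof.
move=> Hw.
rewrite !cntE sum_cat.
have -> : expn b (size w) - 1 = \sum_(x <- strs (size w)) (x != w).
  case: (strs_ok (size w)) => U M.
  rewrite sum_count -(size_strs (size w)) -(count_predC (pred1 w)) count_uniq_mem // M eqxx.
  by rewrite add1n subSS subn0.
rewrite big_distrl /=; apply: leq_sum => x _.
case: (eqVneq x w) => [->|Nx] /=.
  by rewrite mul0n big1 // => y _; rewrite prefix_infix.
rewrite mul1n; apply: leq_sum => y _.
rewrite !prefix0s !suffix0s !andbT.
case Hy: (infix w y); last by case: (~~ _).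
by rewrite (infix_trans Hy (suffix_infix _ _)).
Qed.
End Comb.


Lemma Zpart1 (b p : nat) (A B : nat -> nat) : 1 <= p ->
  (forall m, b * A m + (p == m.+2) = A m.+1 + B m) -> A 0 = (p == 1) :> nat ->
  mul_1_bt b (tmul (1 - Z.of_nat p) (ser A))
    =1 ls_sub ls_one (tmul (2 - Z.of_nat p) (ser B)).
Proof.
move=> Hp HN HA n; rewrite /mul_1_bt /tmul /ser /ls_sub /ls_one.
case: (Z.ltb_spec (n - (2 - Z.of_nat p)) 0) => H2.
  have -> : (n - 1 - (1 - Z.of_nat p) <? 0)%Z = true by apply/Z.ltb_lt; lia.
  case: (Z.ltb_spec (n - (1 - Z.of_nat p)) 0) => H1.
    by case: (Z.eqb_spec n 0) => H0; lia.
  have -> : Z.to_nat (n - (1 - Z.of_nat p)) = 0 by lia.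
  rewrite HA; case: (Z.eqb_spec n 0) => H0; case: eqP => Hp1; lia.
have -> : (n - 1 - (1 - Z.of_nat p) <? 0)%Z = false by apply/Z.ltb_ge; lia.
have -> : (n - (1 - Z.of_nat p) <? 0)%Z = false by apply/Z.ltb_ge; lia.
set m := Z.to_nat (n - (2 - Z.of_nat p)).
have Hm : Z.of_nat m = (n - (2 - Z.of_nat p))%Z by rewrite /m Z2Nat.id //; lia.
have -> : Z.to_nat (n - (1 - Z.of_nat p)) = m.+1 by lia.
have -> : Z.to_nat (n - 1 - (1 - Z.of_nat p)) = m by lia.
have := HN m.
case: (Z.eqb_spec n 0) => H0; case: eqP => Hpm E; lia.
Qed.

Lemma Zpart2 (b : nat) (A C : nat -> nat) :
  (forall m, b * C m = C m.+1 + A m) -> C 0 = 1 ->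
  mul_1_bt b (ser C) =1 ls_sub ls_one (tmul 1 (ser A)).
Proof.
move=> HN HC n; rewrite /mul_1_bt /tmul /ser /ls_sub /ls_one.
case: (Z.ltb_spec n 0) => H0.
  have -> : (n - 1 <? 0)%Z = true by apply/Z.ltb_lt; lia.
  by case: (Z.eqb_spec n 0) => H; lia.
case: (Z.eqb_spec n 0) => Hn.
  subst n; rewrite /= HC; lia.
have -> : (n - 1 <? 0)%Z = false by apply/Z.ltb_ge; lia.
set m := Z.to_nat (n - 1).
have -> : Z.to_nat n = m.+1 by lia.
have := HN m; lia.
Qed.


Lemma INRD m n : INR (m + n) = (INR m + INR n)%R.
Proof. exact: plus_INR. Qed.
Lemma INRM m n : INR (m * n) = (INR m * INR n)%R.
Proof. exact: mult_INR. Qed.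
Lemma INRX b n : INR (expn b n) = (INR b ^ n)%R.
Proof. elim: n => [|n IH] //=; by rewrite expnS INRM IH. Qed.

Section Real.
Open Scope R_scope.
Variables (b p : nat) (A B C : nat -> nat).
Hypothesis Hb : (2 <= b)%nat.
Hypothesis Hp : (1 <= p)%nat.
Hypothesis HN1 : forall m, (b * C m = C m.+1 + A m)%nat.
Hypothesis HC0 : C 0 = 1%nat.
Hypothesis HN2 : forall m, (b * A m + (p == m.+2) = A m.+1 + B m)%nat.
Hypothesis HA0 : A 0 = (p == 1)%nat.
Hypothesis HAC : forall m, (A m <= C m)%nat.
Hypothesis HCb : forall n, (C (p + n) <= (expn b p - 1) * C n)%nat.

Let bR := INR b.
Lemma bR_gt1 : 1 < bR.
Proof. rewrite /bR (_ : 1 = INR 1) //; apply: lt_INR; apply/ltP; lia. Qed.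
Let bRn n : bR ^ n <> 0.
Proof. apply: pow_nonzero; have := bR_gt1; lra. Qed.
Let bRp n : 0 < bR ^ n.
Proof. apply: pow_lt; have := bR_gt1; lra. Qed.

Definition D n := INR (C n) / bR ^ n.
Definition E n := INR (A n) / bR ^ n.

Lemma D_ge0 n : 0 <= D n.
Proof. rewrite /D; apply: Rmult_le_pos; [exact: pos_INR | apply/Rlt_le/Rinv_0_lt_compat/bRp]. Qed.
Lemma E_ge0 n : 0 <= E n.
Proof. rewrite /E; apply: Rmult_le_pos; [exact: pos_INR | apply/Rlt_le/Rinv_0_lt_compat/bRp]. Qed.
Lemma E_le_D n : E n <= D n.
Proof.
rewrite /E /D; apply: Rmult_le_compat_r; [apply/Rlt_le/Rinv_0_lt_compat/bRp|].
by apply: le_INR; apply/leP.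
Qed.

Lemma D_dec n : D n.+1 <= D n.
Proof.
have H : INR (C n.+1) <= bR * INR (C n).
  rewrite /bR -INRM; apply: le_INR; apply/leP; rewrite HN1; lia.
rewrite /D /=. have := bRp n. have := bR_gt1. move=> h1 h2.
apply: (Rmult_le_reg_r (bR * bR ^ n)); first nra.
replace (INR (C n.+1) / (bR * bR ^ n) * (bR * bR ^ n)) with (INR (C n.+1)) by (field; split; lra).
replace (INR (C n) / bR ^ n * (bR * bR ^ n)) with (bR * INR (C n)) by (field; lra).
exact: H.
Qed.

Lemma D_mono n m : (n <= m)%nat -> D m <= D n.
Proof.
elim: m => [|m IH]; first by rewrite leqn0 => /eqP ->; lra.
rewrite leq_eqVlt => /orP [/eqP -> | H]; first lra.
have := D_dec m; have := IH H; lra.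
Qed.

Let q := (bR ^ p - 1) / bR ^ p.

Lemma q_bounds : 0 <= q < 1.
Proof.
have h := bRp p.
have h1 : 1 <= bR ^ p by apply: pow_R1_Rle; have := bR_gt1; lra.
rewrite /q; split.
  apply: Rmult_le_pos; [lra | apply/Rlt_le/Rinv_0_lt_compat/h].
apply: (Rmult_lt_reg_r (bR ^ p)) => //.
replace ((bR ^ p - 1) / bR ^ p * bR ^ p) with (bR ^ p - 1) by (field; lra).
lra.
Qed.

Lemma D_step n : D (p + n) <= q * D n.
Proof.
have H : INR (C (p + n)) <= (bR ^ p - 1) * INR (C n).
  have := HCb n => /leP /le_INR; rewrite INRM minus_INR ?INRX //.
  apply/leP; rewrite expn_gt0; lia.
rewrite /D /q pow_add.
have h := bRp p; have h' := bRp n.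
apply: (Rmult_le_reg_r (bR ^ p * bR ^ n)); first nra.
replace (INR (C (p + n)) / (bR ^ p * bR ^ n) * (bR ^ p * bR ^ n)) with (INR (C (p + n))) by (field; lra).
replace ((bR ^ p - 1) / bR ^ p * (INR (C n) / bR ^ n) * (bR ^ p * bR ^ n)) with ((bR ^ p - 1) * INR (C n)) by (field; lra).
exact: H.
Qed.

Lemma D_pow k : D (p * k) <= q ^ k.
Proof.
elim: k => [|k IH]; first by rewrite muln0 /D HC0 /=; lra.
rewrite mulnS /=.
have := D_step (p * k); have := q_bounds; have := D_ge0 (p * k).
move=> h0 hq hs.
apply: (Rle_trans _ _ _ hs); apply: Rmult_le_compat_l; lra.
Qed.

Lemma D_lim eps : 0 < eps -> exists N, forall n, (N <= n)%nat -> D n < eps.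
Proof.
move=> He.
have [hq0 hq1] := q_bounds.
have [N0 HN0] := pow_lt_1_zero q (ltac:(rewrite Rabs_right; lra)) eps He.
exists (p * N0)%nat => n Hn.
have h1 := D_mono _ _ Hn.
have h2 := D_pow N0.
have h3 := HN0 N0 (le_n _).
have h4 : q ^ N0 <= Rabs (q ^ N0) by apply: Rle_abs.
lra.
Qed.

Lemma S1 n : sum_f_R0 (fun l => INR (A l) / INR b ^ l) n = bR * (1 - D n.+1).
Proof.
elim: n => [|n IH].
  have := HN1 0 => /(f_equal INR); rewrite INRM INRD HC0 /D /= -/bR => H.
  field_simplify; try lra. have := bR_gt1; lra.
rewrite /= IH -/bR.
have := HN1 n.+1 => /(f_equal INR); rewrite INRM INRD -/bR => H.
have h := bRp n; have h1 := bR_gt1.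
have -> : INR (A n.+1) = bR * INR (C n.+1) - INR (C n.+2) by lra.
rewrite /D /=.
field; lra.
Qed.

Lemma S2 n : sum_f_R0 (fun l => INR (B l) / INR b ^ l) n =
  bR * INR (A 0) + sum_f_R0 (fun l => INR (p == l.+2) / bR ^ l) n - bR * E n.+1.
Proof.
have h1 := bR_gt1.
elim: n => [|n IH].
  have := HN2 0 => /(f_equal INR); rewrite !INRD INRM -/bR => H.
  rewrite /E /=.
  have -> : INR (B 0) = bR * INR (A 0) + INR (p == 2%nat) - INR (A 1) by lra.
  field; lra.
rewrite /= IH -/bR.
have := HN2 n.+1 => /(f_equal INR); rewrite !INRD INRM -/bR => H.
have h := bRp n.
rewrite /E /=.
have -> : INR (B n.+1) = bR * INR (A n.+1) + INR (p == n.+3) - INR (A n.+2) by lra.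
field; lra.
Qed.

Lemma T_val n : (p <= n)%nat ->
  bR * INR (A 0) + sum_f_R0 (fun l => INR (p == l.+2) / bR ^ l) n = powerRZ bR (2 - Z.of_nat p).
Proof.
rewrite HA0.
case: p Hp => [|[|q']] // _ Hn.
  have -> : sum_f_R0 (fun l => INR (1%nat == l.+2) / bR ^ l) n = 0.
    elim: n {Hn} => [|n IH] /=; first lra.
    rewrite IH; lra.
  rewrite /=; ring.
have -> : (2 - Z.of_nat q'.+2)%Z = (- Z.of_nat q')%Z by lia.
have -> : powerRZ bR (- Z.of_nat q') = / bR ^ q'.
  case: q' {Hn} => [|k] /=; first by rewrite Rinv_1.
  by rewrite SuccNat2Pos.id_succ.
have E : forall n, sum_f_R0 (fun l => INR (q'.+2 == l.+2) / bR ^ l) n =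
   if (q' <= n)%nat then / bR ^ q' else 0.
  elim => [|k IH] /=.
    case: q' {Hn} => [|k] /=; first by field.
    lra.
  rewrite IH eqSS eqSS.
  have F0 : INR false = 0 by [].
  have F1 : INR true = 1 by [].
  have hk := bRp k.
  case: (ltngtP q' k.+1) => H.
  - rewrite ltnS in H; rewrite H F0 /Rdiv Rmult_0_l Rplus_0_r //.
  - have H' : (q' <= k)%nat = false by apply/negbTE; rewrite -ltnNge; lia.
    rewrite H' F0 /Rdiv Rmult_0_l Rplus_0_r //.
  - rewrite H ltnn F1 /=. by rewrite Rplus_0_l /Rdiv Rmult_1_l.
rewrite E (_ : (q' <= n)%nat = true) /=; last by lia.
lra.
Qed.

Lemma evalA : eval_inv_b b A (INR b).
Proof.
move=> eps He.
have h1 := bR_gt1.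
have [N HN] := D_lim (eps / bR) (ltac:(apply: Rdiv_lt_0_compat; lra)).
exists N => n /leP Hn.
rewrite /Rdist S1 -/bR.
have hD := D_ge0 n.+1.
have hD2 := HN n.+1 (ltac:(lia)).
rewrite (_ : bR * (1 - D n.+1) - bR = - (bR * D n.+1)); last ring.
rewrite Rabs_Ropp Rabs_right; last nra.
apply: (Rmult_lt_reg_r (/ bR)); first by apply: Rinv_0_lt_compat; lra.
replace (bR * D n.+1 * / bR) with (D n.+1) by (field; lra).
exact: hD2.
Qed.

Lemma evalB : eval_inv_b b B (powerRZ (INR b) (2 - Z.of_nat p)).
Proof.
move=> eps He.
have h1 := bR_gt1.
have [N HN] := D_lim (eps / bR) (ltac:(apply: Rdiv_lt_0_compat; lra)).
exists (N + p)%nat => n /leP Hn.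
rewrite /Rdist S2 -/bR -(T_val n); last by lia.
have hD := E_ge0 n.+1.
have hD1 := E_le_D n.+1.
have hD2 := HN n.+1 (ltac:(lia)).
rewrite (_ : forall x y z : R, x + y - z - (x + y) = - z); last by move=> *; ring.
rewrite Rabs_Ropp Rabs_right; last nra.
apply: (Rmult_lt_reg_r (/ bR)); first by apply: Rinv_0_lt_compat; lra.
replace (bR * E n.+1 * / bR) with (E n.+1) by (field; lra).
replace (eps * / bR) with (eps / bR) by reflexivity.
lra.
Qed.
End Real.

Theorem lemma5 (b : nat) (w : seq 'I_b) :
  2 <= b -> 1 <= size w ->
  let p := size w in
  let u := take (p - 1) w in
  let v := drop 1 w in
  mul_1_bt b (tmul (1 - Z.of_nat p) (ser (cnt w v [::])))
    =1 ls_sub ls_one (tmul (2 - Z.of_nat p) (ser (cnt w v u)))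
  /\ mul_1_bt b (ser (cnt w [::] [::]))
    =1 ls_sub ls_one (tmul 1 (ser (cnt w v [::])))
  /\ eval_inv_b b (cnt w v [::]) (INR b)
  /\ eval_inv_b b (cnt w v u) (powerRZ (INR b) (2 - Z.of_nat p)).
Proof.
move=> Hb Hp p u v.
have Hw0 : w != [::] by apply/eqP => E; move: Hp; rewrite E.
have [d1 Hw1] : exists d1, w = d1 :: v.
  by move: Hw0; rewrite /v; case: (w) => // d1 w' _; exists d1; rewrite /= drop0.
have [u' [dp Hw2]] : exists u' dp, w = rcons u' dp.
  by move: Hw0; case/lastP: (w) => // u' dp _; exists u', dp.
have Hu : u = u' by rewrite /u /p Hw2 size_rcons subn1 /= -cats1 take_size_cat.
rewrite -Hu in Hw2.
have Sp : p = (size v).+1 by rewrite /p Hw1.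
have HN1 : forall m, b * cnt w [::] [::] m = cnt w [::] [::] m.+1 + cnt w v [::] m.
  by move=> m; rewrite Hw1; exact: N1.
have HN2 : forall m, b * cnt w v [::] m + (p == m.+2) = cnt w v [::] m.+1 + cnt w v u m.
  by move=> m; rewrite Sp eqSS; exact: (@N2 b w d1 v u dp m Hw1 Hw2).
have HC0 : cnt w [::] [::] 0 = 1 by exact: C0.
have HA0 : cnt w v [::] 0 = (p == 1) by rewrite A0 // Sp eqSS -size_eq0.
have HAC : forall m, cnt w v [::] m <= cnt w [::] [::] m by move=> m; exact: AleC.
have HCb : forall n, cnt w [::] [::] (p + n) <= (expn b p - 1) * cnt w [::] [::] n.
  by move=> n; exact: Cbound.
split; first exact: Zpart1.
split; first exact: Zpart2.
split.
  exact: (@evalA b p (cnt w v [::]) (cnt w [::] [::]) Hb Hp HN1 HC0 HA0 HCb).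
exact: (@evalB b p (cnt w v [::]) (cnt w v u) (cnt w [::] [::]) Hb Hp HN1 HC0 HN2 HA0 HAC HCb).
Qed.
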